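(* Algorithm $\mathsf{NG}$ (described in the context) does not satisfy the common core property. That is, it is not the case that for every finite set of processes $\mathcal{P}$, every asymmetric fail-prone system $\mathbb{F}$ on $\mathcal{P}$, every asymmetric Byzantine quorum system $\mathbb{Q}$ for $\mathbb{F}$, and every execution of $\mathsf{NG}$ with a guild, there exists a set $S^+$ consisting of the values ag-proposed by the members of some quorum $Q_i\in\mathcal{Q}_i$ of some process $p_i$ in the maximal guild, such that $S^+\subseteq U$ for every set $U$ ag-delivered by a process of the maximal guild.
   Context: System model: a finite set $\mathcal{P}=\{p_1,\dots,p_n\}$ of processes communicating asynchronously over authenticated point-to-point links; every message sent from a correct process to a correct process is eventually delivered. A process that follows its protocol is correct; others (faulty, Byzantine) may behave arbitrarily. $F\subseteq\mathcal{P}$ denotes the (unknown) set of faulty processes of an execution. For $\mathcal{A}\subseteq 2^{\mathcal{P}}$, write $\mathcal{A}^*=\{A' : A'\subseteq A,\ A\in\mathcal{A}\}$. An asymmetric fail-prone system is an array $\mathbb{F}=[\mathcal{F}_1,\dots,\mathcal{F}_n]$ with $\mathcal{F}_i\subseteq 2^{\mathcal{P}}$. An asymmetric Byzantine quorum system for $\mathbb{F}$ is an array $\mathbb{Q}=[\mathcal{Q}_1,\dots,\mathcal{Q}_n]$ with $\mathcal{Q}_i\subseteq 2^{\mathcal{P}}$ (elements of $\mathcal{Q}_i$ are called quorums for $p_i$) satisfying: (consistency) for all $i,j$, all $Q_i\in\mathcal{Q}_i$, $Q_j\in\mathcal{Q}_j$ and all $F_{ij}\in\mathcal{F}_i^*\cap\mathcal{F}_j^*$,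 $Q_i\cap Q_j\not\subseteq F_{ij}$; (availability) for all $i$ and all $F_i\in\mathcal{F}_i$ there is $Q_i\in\mathcal{Q}_i$ with $F_i\cap Q_i=\emptyset$. A correct process $p_i$ is wise if $F\in\mathcal{F}_i^*$ and naive otherwise. A guild is a set $\mathcal{G}$ of wise processes such that every $p_i\in\mathcal{G}$ has some $Q_i\in\mathcal{Q}_i$ with $Q_i\subseteq\mathcal{G}$. An execution with a guild is one in which a nonempty guild exists; the maximal guild is the union of all guilds. Asymmetric reliable broadcast (interface arb-broadcast / arb-deliver) is a primitive which, in every execution with a guild, guarantees: if a correct process arb-broadcasts $m$, every process of the maximal guild eventually arb-delivers $m$; for each sender, all processes of the maximal guild that arb-deliver a message from it arb-deliver the same message; if some process of the maximal guild arb-delivers a message from a sender, every process of the maximal guild eventually arb-delivers a message from that sender; a correct process arb-delivers at most one message per sender, and if the sender is correct, only a message it arb-broadcast. Algorithm $\mathsf{NG}$ (code of process $p_i$; each correct process invokes ag-propose$(x_i)$ exactly once; each guarded action ''upon there being ...'' is executed at most once). State: sets $S_i,T_i,U_i$, initially empty. (1) Upon ag-propose$(x_i)$: arb-broadcast $(p_i,x_i)$. (2) Upon arb-delivering $(p_j,x_j)$ from $p_j$: $S_i\gets S_i\cup\{(p_j,x_j)\}$. (3) Upon there being $Q\in\mathcal{Q}_i$ such that $p_i$ has arb-delivered from every member of $Q$: send $\langle\mathrm{DistributeS},p_i,S_i\rangle$ to all processes. (4) Upon receiving $\langle\mathrm{DistributeS},p_j,S_j\rangle$: $T_i\gets T_i\cup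 S_j$. (5) Upon there being $Q\in\mathcal{Q}_i$ such that a DistributeS message was received from every member of $Q$: send $\langle\mathrm{DistributeT},p_i,T_i\rangle$ to all processes. (6) Upon receiving $\langle\mathrm{DistributeT},p_j,T_j\rangle$ from $p_j$: $U_i\gets U_i\cup T_j$. (7) Upon there being $Q\in\mathcal{Q}_i$ such that a DistributeT message was received from every member of $Q$: ag-deliver$(U_i)$. Common core property (of a protocol with interface ag-propose/ag-deliver): in any execution with a guild, there exists a set $S^+$ composed of the values ag-proposed by the processes of some quorum $Q_i\in\mathcal{Q}_i$ of some process $p_i$ in the maximal guild, such that every process of the maximal guild that ag-delivers a set $U$ has $S^+\subseteq U$. *)

(* Defs.v *)
(* Model of executions of Algorithm NG on top of an abstract
   asymmetric reliable broadcast (arb) satisfying its specification. *)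
From mathcomp Require Import all_boot.
Set Implicit Arguments. Unset Strict Implicit. Unset Printing Implicit Defensive.

Section NGModel.
Variables (n : nat) (V : finType).
Local Notation P := 'I_n.

Definition in_star (A : {set {set P}}) (X : {set P}) : Prop :=
  exists2 A0, A0 \in A & X \subset A0.

Definition asym_quorum_system (Fs Qs : P -> {set {set P}}) : Prop :=
  (forall i j Qi Qj Fij, Qi \in Qs i -> Qj \in Qs j ->
     in_star (Fs i) Fij -> in_star (Fs j) Fij -> ~ (Qi :&: Qj \subset Fij))
  /\ (forall i Fi, Fi \in Fs i -> exists2 Qi, Qi \in Qs i & [disjoint Fi & Qi]).

(* Input events at a process: arb-delivery of value v from sender j
   (the arb-broadcast payload (p_j, x_j) is represented by sender j and x_j),
   receipt of a DistributeS / DistributeT message (with its set) from sender j. *)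
Inductive event :=
| EDeliver of P & V
| ERecvS of P & {set P * V}
| ERecvT of P & {set P * V}.

(* F = faulty set, prop = proposals of correct processes, pt = time of
   ag-propose, trace i t = the (at most one) input event of process i at
   global time t. *)
Record execution := Exec {
  ex_F : {set P};
  ex_prop : P -> V;
  ex_pt : P -> nat;
  ex_trace : P -> nat -> option event }.

Variables (Fs Qs : P -> {set {set P}}) (E : execution).
Local Notation F := (ex_F E).
Local Notation tr := (ex_trace E).

Definition correct (i : P) : Prop := i \notin F.
Definition wise (i : P) : Prop := correct i /\ in_star (Fs i) F.
Definition guild (G : {set P}) : Prop :=
  (forall i, i \in G -> wise i) /\
  (forall i, i \in G -> exists2 Q, Q \in Qs i & Q \subset G).
Definition has_guild : Prop := exists G, guild G /\ G != set0.
Definition in_maxguild (i : P) : Prop := exists G, guild G /\ i \in G.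

(* local state of process i after the event at time t *)
Definition arb_delivered_by (i : P) (t : nat) (j : P) : Prop :=
  exists t' v, t' <= t /\ tr i t' = Some (EDeliver j v).
Definition Sst (i : P) (t : nat) (p : P * V) : Prop :=
  exists t', t' <= t /\ tr i t' = Some (EDeliver p.1 p.2).
Definition recvS_by (i : P) (t : nat) (j : P) : Prop :=
  exists t' X, t' <= t /\ tr i t' = Some (ERecvS j X).
Definition Tst (i : P) (t : nat) (p : P * V) : Prop :=
  exists t' j X, t' <= t /\ tr i t' = Some (ERecvS j X) /\ p \in X.
Definition recvT_by (i : P) (t : nat) (j : P) : Prop :=
  exists t' X, t' <= t /\ tr i t' = Some (ERecvT j X).
Definition Ust (i : P) (t : nat) (p : P * V) : Prop :=
  exists t' j X, t' <= t /\ tr i t' = Some (ERecvT j X) /\ p \in X.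

Definition guard3 i t : Prop :=
  exists2 Q, Q \in Qs i & forall j, j \in Q -> arb_delivered_by i t j.
Definition guard5 i t : Prop :=
  exists2 Q, Q \in Qs i & forall j, j \in Q -> recvS_by i t j.
Definition guard7 i t : Prop :=
  exists2 Q, Q \in Qs i & forall j, j \in Q -> recvT_by i t j.
(* a guarded action is executed (once) at the first time its guard holds *)
Definition first_time (g : nat -> Prop) (t : nat) : Prop :=
  g t /\ forall t', t' < t -> ~ g t'.

Definition ag_delivers (i : P) (U : {set P * V}) : Prop :=
  exists t, first_time (guard7 i) t /\ forall p, p \in U <-> Ust i t p.

Definition arb_spec : Prop :=
  (forall i j t1 t2 v1 v2, correct i ->
     tr i t1 = Some (EDeliver j v1) -> tr i t2 = Some (EDeliver j v2) -> t1 = t2)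
  (* integrity: from a correct sender, only the message it arb-broadcast,
     after it was broadcast (at its ag-propose) *)
  /\ (forall i j t v, correct i -> correct j ->
     tr i t = Some (EDeliver j v) -> v = ex_prop E j /\ ex_pt E j < t)
  /\ (has_guild ->
      (forall i j, in_maxguild i -> correct j ->
         exists t, tr i t = Some (EDeliver j (ex_prop E j)))
      /\ (forall i k j t1 t2 v1 v2, in_maxguild i -> in_maxguild k ->
         tr i t1 = Some (EDeliver j v1) -> tr k t2 = Some (EDeliver j v2) -> v1 = v2)
      /\ (forall i k j t1 v1, in_maxguild i -> in_maxguild k ->
         tr i t1 = Some (EDeliver j v1) -> exists t2 v2, tr k t2 = Some (EDeliver j v2))).

(* authenticated reliable links between correct processes: each correct process
   sends its DistributeS (resp. DistributeT) message, with content S_j (resp. T_j)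
   at the sending time, to everybody exactly once; it is received exactly once,
   strictly later; nothing else is received from a correct sender.  Messages
   from faulty senders are arbitrary. *)
Definition links_ok : Prop :=
  forall i j, correct i -> correct j ->
  (forall t X, tr i t = Some (ERecvS j X) ->
     exists ts, first_time (guard3 j) ts /\ ts < t /\ forall p, p \in X <-> Sst j ts p)
  /\ (forall ts, first_time (guard3 j) ts -> exists t X, ts < t /\ tr i t = Some (ERecvS j X))
  /\ (forall t1 t2 X1 X2, tr i t1 = Some (ERecvS j X1) -> tr i t2 = Some (ERecvS j X2) -> t1 = t2)
  /\ (forall t X, tr i t = Some (ERecvT j X) ->
     exists ts, first_time (guard5 j) ts /\ ts < t /\ forall p, p \in X <-> Tst j ts p)
  /\ (forall ts, first_time (guard5 j) ts -> exists t X, ts < t /\ tr i t = Some (ERecvT j X))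
  /\ (forall t1 t2 X1 X2, tr i t1 = Some (ERecvT j X1) -> tr i t2 = Some (ERecvT j X2) -> t1 = t2).

(* E is an execution of NG (time 0 is the initial state: no input event) *)
Definition NG_execution : Prop :=
  (forall i, correct i -> tr i 0 = None) /\ arb_spec /\ links_ok.

Definition common_core : Prop :=
  exists i, in_maxguild i /\ exists2 Q, Q \in Qs i &
    exists S : {set P * V},
      (forall p, p \in S -> p.1 \in Q /\ (correct p.1 -> p.2 = ex_prop E p.1)) /\
      (forall j, j \in Q -> exists v, (j, v) \in S) /\
      (forall k U, in_maxguild k -> ag_delivers k U -> S \subset U).

End NGModel.

(* Main.v *)
Require Import Defs.
From mathcomp Require Import all_boot.
From mathcomp Require Import zify.

Notation p0 := (@Ordinal 3 0 isT).
Notation p1 := (@Ordinal 3 1 isT).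
Notation p2 := (@Ordinal 3 2 isT).
Definition S0 : {set 'I_3 * unit} := [set (p0, tt); (p2, tt)].
Definition S1 : {set 'I_3 * unit} := [set (p1, tt); (p2, tt)].
Definition ev := event 3 unit.
Definition trl (i : nat) : seq (option ev) :=
  match i with
  | 0 => [:: None; Some (EDeliver p0 tt); Some (EDeliver p2 tt);
          Some (ERecvS p2 set0); Some (ERecvS p0 S0); Some (ERecvT p2 set0);
          Some (ERecvT p0 S0); Some (EDeliver p1 tt); Some (ERecvS p1 S1);
          Some (ERecvT p1 S1)]
  | 1 => [:: None; Some (EDeliver p1 tt); Some (EDeliver p2 tt);
          Some (ERecvS p2 set0); Some (ERecvS p1 S1); Some (ERecvT p2 set0);
          Some (ERecvT p1 S1); Some (EDeliver p0 tt); Some (ERecvS p0 S0);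
          Some (ERecvT p0 S0)]
  | _ => [:: None; Some (ERecvS p2 set0); Some (ERecvT p2 set0);
          Some (ERecvS p0 S0); Some (ERecvS p1 S1); Some (ERecvT p0 S0);
          Some (ERecvT p1 S1)]
  end.
Definition trx (i : 'I_3) (t : nat) : option ev := nth None (trl (val i)) t.
Definition Ex : execution 3 unit := Exec set0 (fun _ => tt) (fun _ => 0) trx.
Definition Fsx (i : 'I_3) : {set {set 'I_3}} :=
  if val i == 2 then set0 else [set set0].
Definition Qsx (i : 'I_3) : {set {set 'I_3}} :=
  match val i with
  | 0 => [set [set p0; p1]; [set p0; p2]]
  | 1 => [set [set p0; p1]; [set p1; p2]]
  | _ => [set set0]
  end.

Ltac destr_t t :=
  let rec go n := match n with O => idtac | S ?m => destruct t as [|t]; [idtac | go m] end in go 10.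

Ltac inv_tr H := rewrite /= /trx /= ?nth_nil in H; first [discriminate H | injection H; intros; subst; try discriminate].

Lemma ord3 (P : 'I_3 -> Prop) : P p0 -> P p1 -> P p2 -> forall i, P i.
Proof.
move=> H0 H1 H2 [[|[|[|m]]] Hm] //.
- by rewrite (_ : Ordinal Hm = p0) //; apply: val_inj.
- by rewrite (_ : Ordinal Hm = p1) //; apply: val_inj.
- by rewrite (_ : Ordinal Hm = p2) //; apply: val_inj.
Qed.

Lemma ft_uniq g t1 t2 : first_time g t1 -> first_time g t2 -> t1 = t2.
Proof.
move=> [g1 n1] [g2 n2]; case: (ltngtP t1 t2) => // h.
- by case: (n2 _ h).
- by case: (n1 _ h).
Qed.

Lemma star_ok i X : in_star (Fsx i) X -> X = set0 /\ val i != 2.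
Proof.
move=> [A HA HF]; move: HA; rewrite /Fsx; case: ifP => // H; first by rewrite inE.
rewrite inE => /eqP HA; subst A; split=> //; by apply/eqP; rewrite -subset0.
Qed.

Lemma quorum_sys : asym_quorum_system Fsx Qsx.
Proof.
split.
- move=> i j Qi Qj Fij HQi HQj /star_ok [-> Hi] /star_ok [_ Hj] Hs.
  move: i HQi Hi Hs; apply: ord3 => //=; rewrite /Qsx /= !inE => /orP[]/eqP-> _;
  move: j HQj Hj; apply: ord3 => //=; rewrite /Qsx /= !inE //=;
  move=> /orP[]/eqP-> _;
  rewrite subset0 => /eqP/setP H;
  solve [ move: (H p0); rewrite !inE; by vm_compute | move: (H p1); rewrite !inE; by vm_compute | move: (H p2); rewrite !inE; by vm_compute ].
- move=> i Fi; rewrite /Fsx; case: ifP => Hi; first by rewrite inE.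
  rewrite inE => /eqP->.
  move: i Hi; apply: ord3; rewrite /Qsx //= => _.
  + by exists [set p0; p1]; [rewrite !inE eqxx | rewrite disjoints_subset sub0set].
  + by exists [set p0; p1]; [rewrite !inE eqxx | rewrite disjoints_subset sub0set].
Qed.

Ltac find_t := let rec go n := match n with O => fail | S ?m => first [ exists m; eexists; split; [done|reflexivity] | go m ] end in go 11.

Ltac kill1 HQm j := let t := fresh "t" in let X := fresh "X" in let Hle := fresh "Hle" in let Htr := fresh "Htr" in
  lapply (HQm j); [ move=> [t [X [Hle Htr]]]; destr_t t; inv_tr Htr; lia | by rewrite !inE eqxx ?orbT ].
Ltac kill HQm := first [ kill1 HQm constr:(p0) | kill1 HQm constr:(p1) | kill1 HQm constr:(p2) ].

Ltac ft_tac Q :=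
  split; [ exists Q; [by rewrite /Qsx !inE eqxx ?orbT
                     | move=> j; rewrite !inE => /orP[]/eqP->; find_t ]
         | let tt' := fresh "tt" in let Ht' := fresh "Ht" in let HH := fresh "HH" in
           let Q' := fresh "Q" in let HQ := fresh "HQ" in let HQm := fresh "HQm" in
           intros tt' Ht' HH; destruct HH as [Q' HQ HQm]; revert HQ; rewrite /Qsx !inE;
           case/orP => /eqP HQ; subst Q'; kill HQm ].

Lemma ft3_0 : first_time (guard3 Qsx Ex p0) 2.
Proof. ft_tac [set p0; p2]. Qed.
Lemma ft3_1 : first_time (guard3 Qsx Ex p1) 2.
Proof. ft_tac [set p1; p2]. Qed.
Lemma ft5_0 : first_time (guard5 Qsx Ex p0) 4.
Proof. ft_tac [set p0; p2]. Qed.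
Lemma ft5_1 : first_time (guard5 Qsx Ex p1) 4.
Proof. ft_tac [set p1; p2]. Qed.
Lemma ft7_0 : first_time (guard7 Qsx Ex p0) 6.
Proof. ft_tac [set p0; p2]. Qed.
Lemma ft7_1 : first_time (guard7 Qsx Ex p1) 6.
Proof. ft_tac [set p1; p2]. Qed.
Lemma ft3_2 : first_time (guard3 Qsx Ex p2) 0.
Proof. split=> // ; exists set0; [by rewrite /Qsx inE | by move=> j; rewrite inE]. Qed.
Lemma ft5_2 : first_time (guard5 Qsx Ex p2) 0.
Proof. split=> // ; exists set0; [by rewrite /Qsx inE | by move=> j; rewrite inE]. Qed.

Definition Sof (j : 'I_3) : {set 'I_3 * unit} :=
  match val j with 0 => S0 | 1 => S1 | _ => set0 end.
Definition ts3 (j : 'I_3) := if val j == 2 then 0 else 2.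
Definition ts5 (j : 'I_3) := if val j == 2 then 0 else 4.

Lemma ft3 j : first_time (guard3 Qsx Ex j) (ts3 j).
Proof. move: j; apply: ord3; [exact: ft3_0 | exact: ft3_1 | exact: ft3_2]. Qed.
Lemma ft5 j : first_time (guard5 Qsx Ex j) (ts5 j).
Proof. move: j; apply: ord3; [exact: ft5_0 | exact: ft5_1 | exact: ft5_2]. Qed.

Ltac set_tac0 :=
  let t' := fresh "t" in let Hle := fresh "Hle" in let Htr := fresh "Htr" in
  intros [t' [Hle Htr]]; destr_t t'; inv_tr Htr; try lia; by rewrite !inE ?eqxx ?orbT.
Ltac set_tac1 :=
  let t' := fresh "t" in let Hle := fresh "Hle" in let Htr := fresh "Htr" in
  let j := fresh "j" in let X := fresh "X" in let Hp := fresh "Hp" in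
  intros [t' [j [X [Hle [Htr Hp]]]]]; destr_t t'; inv_tr Htr; try lia; try (by rewrite inE in Hp); exact Hp.

Lemma SstE j p : p \in Sof j <-> Sst Ex j (ts3 j) p.
Proof.
case: p => a b; move: j; apply: ord3; rewrite /Sof /ts3 /=; split.
- by rewrite !inE => /orP[]/eqP[-> ->]; [exists 1 | exists 2].
- set_tac0.
- by rewrite !inE => /orP[]/eqP[-> ->]; [exists 1 | exists 2].
- set_tac0.
- by rewrite inE.
- set_tac0.
Qed.

Lemma TstE j p : p \in Sof j <-> Tst Ex j (ts5 j) p.
Proof.
move: j; apply: ord3; rewrite /Sof /ts5 /=; split.
- by move=> Hp; exists 4, p0, S0; split=> //; split=> //.
- set_tac1.
- by move=> Hp; exists 4, p1, S1; split=> //; split=> //.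
- set_tac1.
- by rewrite inE.
- set_tac1.
Qed.

Lemma Ust0 p : p \in S0 <-> Ust Ex p0 6 p.
Proof. split; [by move=> Hp; exists 6, p0, S0; split=> //; split=> // | set_tac1]. Qed.
Lemma Ust1 p : p \in S1 <-> Ust Ex p1 6 p.
Proof. split; [by move=> Hp; exists 6, p1, S1; split=> //; split=> // | set_tac1]. Qed.

Lemma mg_not2 i : in_maxguild Fsx Qsx Ex i -> val i != 2.
Proof. move=> [G [[Hw _] HG]]; have [_ /star_ok [_ ->]] := Hw i HG; done. Qed.

Lemma guild0 : guild Fsx Qsx Ex [set p0; p1].
Proof.
split=> i; rewrite !inE => /orP[]/eqP->.
- split; [by rewrite /correct inE | by exists set0; rewrite /Fsx ?inE].
- split; [by rewrite /correct inE | by exists set0; rewrite /Fsx ?inE].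
- by exists [set p0; p1]; rewrite /Qsx ?inE ?eqxx.
- by exists [set p0; p1]; rewrite /Qsx ?inE ?eqxx.
Qed.

Lemma mg0 : in_maxguild Fsx Qsx Ex p0.
Proof. by exists [set p0; p1]; split; [exact: guild0 | rewrite !inE eqxx]. Qed.
Lemma mg1 : in_maxguild Fsx Qsx Ex p1.
Proof. by exists [set p0; p1]; split; [exact: guild0 | rewrite !inE eqxx ?orbT]. Qed.

Lemma hasg : has_guild Fsx Qsx Ex.
Proof.
exists [set p0; p1]; split; first exact: guild0.
by apply/set0Pn; exists p0; rewrite !inE eqxx.
Qed.

Lemma valid i j : in_maxguild Fsx Qsx Ex i -> exists t, ex_trace Ex i t = Some (EDeliver j tt).
Proof.
move=> /mg_not2; move: i; apply: ord3 => // _; move: j; apply: ord3; first [by exists 1 | by exists 2 | by exists 7].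
Qed.

Lemma arbok : arb_spec Fsx Qsx Ex.
Proof.
split; [|split].
- move=> i; move: i; apply: ord3 => j t1 t2 v1 v2 _ H1 H2;
  destr_t t1; inv_tr H1; destr_t t2; inv_tr H2; done.
- move=> i; move: i; apply: ord3 => j t v _ _ H; (destruct t; [inv_tr H | split; [by destruct v | done]]).
- move=> _; split; [|split].
  + by move=> i j Hi _; apply: valid.
  + by move=> i k j t1 t2 [] [].
  + move=> i k j t1 v1 _ Hk _; have [t Ht] := @valid k j Hk; by exists t, tt.
Qed.

Lemma links : links_ok Qsx Ex.
Proof.
move=> i j _ _; split; [|split; [|split; [|split; [|split]]]].
- move: i j; apply: ord3 => j t X H; destr_t t; inv_tr H;
  (eexists; split; [apply: ft3 | split; [done | move=> p; split=> Hp; [apply/(SstE _ p); exact Hp | move/(SstE _ p): Hp => Hq; exact Hq]]]).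
- move=> ts Hts; rewrite (ft_uniq _ _ _ Hts (ft3 j)); clear Hts; move: i j; apply: ord3; apply: ord3; find_t.
- move: i j; apply: ord3 => j t1 t2 X1 X2 H1 H2;
  destr_t t1; inv_tr H1; destr_t t2; inv_tr H2; done.
- move: i j; apply: ord3 => j t X H; destr_t t; inv_tr H;
  (eexists; split; [apply: ft5 | split; [done | move=> p; split=> Hp; [apply/(TstE _ p); exact Hp | move/(TstE _ p): Hp => Hq; exact Hq]]]).
- move=> ts Hts; rewrite (ft_uniq _ _ _ Hts (ft5 j)); clear Hts; move: i j; apply: ord3; apply: ord3; find_t.
- move: i j; apply: ord3 => j t1 t2 X1 X2 H1 H2;
  destr_t t1; inv_tr H1; destr_t t2; inv_tr H2; done.
Qed.

Lemma ngex : NG_execution Fsx Qsx Ex.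
Proof.
split; [|split; [exact: arbok | exact: links]].
by move=> i _; move: i; apply: ord3.
Qed.

Theorem lemma3p2 :
  ~ (forall (n : nat) (V : finType) (Fs Qs : 'I_n -> {set {set 'I_n}})
        (E : execution n V),
       asym_quorum_system Fs Qs ->
       NG_execution Fs Qs E ->
       has_guild Fs Qs E ->
       common_core Fs Qs E).
Proof.
move=> H.
have [i [Hi [Q HQ [S [_ [HS2 HS3]]]]]] := H 3 unit Fsx Qsx Ex quorum_sys ngex hasg.
have U0 : S \subset S0 by apply: (HS3 p0 S0 mg0); exists 6; split; [exact: ft7_0 | exact: Ust0].
have U1 : S \subset S1 by apply: (HS3 p1 S1 mg1); exists 6; split; [exact: ft7_1 | exact: Ust1].
have Hi2 := @mg_not2 i Hi.
move: i Hi Hi2 HQ HS2; apply: ord3 => // _ _; rewrite /Qsx !inE => HQ HS2.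
- have [v Hv] : exists v, (p0, v) \in S.
    by apply: HS2; case/orP: HQ => /eqP->; rewrite !inE eqxx.
  by move: (subsetP U1 _ Hv); rewrite !inE; destruct v.
- have [v Hv] : exists v, (p1, v) \in S.
    by apply: HS2; case/orP: HQ => /eqP->; rewrite !inE eqxx ?orbT.
  by move: (subsetP U0 _ Hv); rewrite !inE; destruct v.
Qed.
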